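(* In the social learning model, suppose that $G_-$ and $G_+$ are continuous and that the left tail of $G_-$ is convex and differentiable. Suppose $f\colon\mathbb{R}_{>0}\to\mathbb{R}_{>0}$ satisfies $f'(t)=G_-(-f(t))$ for all sufficiently large $t$. Then, conditional on $\theta=+1$, $$\lim_{t\to\infty}\frac{\ell_t}{f(t)}=1$$ with probability $1$.
   Context: Social learning model. A state $\theta\in\{-1,+1\}$ is drawn with $\mathbb{P}(\theta=+1)=\mathbb{P}(\theta=-1)=1/2$. Agents $t=1,2,\dots$ receive private signals $s_t\in\mathbb{R}$ that are i.i.d. conditionally on $\theta$, with CDF $F_+$ if $\theta=+1$ and $F_-$ if $\theta=-1$; $F_+$ and $F_-$ are mutually absolutely continuous. Let $L_t=\log\frac{\mathbb{P}(\theta=+1\mid s_t)}{\mathbb{P}(\theta=-1\mid s_t)}$ be the private log-likelihood ratio, and let $G_+$, $G_-$ denote the CDFs of $L_t$ conditional on $\theta=+1$, $\theta=-1$ respectively. Signals are assumed unbounded: for every $M\in\mathbb{R}$, $\mathbb{P}(L_t>M)>0$ and $\mathbb{P}(L_t<-M)>0$. Agent $t$ observes $a_1,\dots,a_{t-1}$ and her own signal and chooses $a_t\in\{-1,+1\}$ (utility $1$ if $a_t=\theta$, else $0$). The public belief is $\mu_t=\mathbb{P}(\theta=+1\mid a_1,\dots,a_{t-1})$ and $\ell_t=\log\frac{\mu_t}{1-\mu_t}$ (so $\ell_1=0$). In equilibrium $a_t=+1$ iff $\ell_t+L_t>0$, and otherwise $a_t=-1$. Consequently $\ell_{t+1}=\ell_t+D_+(\ell_t)$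 if $a_t=+1$ and $\ell_{t+1}=\ell_t+D_-(\ell_t)$ if $a_t=-1$, where $D_+(x)=\log\frac{1-G_+(-x)}{1-G_-(-x)}$ and $D_-(x)=\log\frac{G_+(-x)}{G_-(-x)}$. We write $\mathbb{P}_+(\cdot)=\mathbb{P}(\cdot\mid\theta=+1)$ and $\mathbb{E}_+$ for the corresponding expectation. ''The left tail of $G_-$ is convex and differentiable'' means: there exists $x_0\in\mathbb{R}$ such that the restriction of $G_-$ to $(-\infty,x_0)$ is convex and differentiable. *)

(* Defs.v *)
From Stdlib Require Import Reals Lra List.
Open Scope R_scope.

(* G is a CDF on R (convention G x = P(L <= x)). *)
Definition is_cdf (G : R -> R) : Prop :=
  (forall x y, x <= y -> G x <= G y) /\
  (forall e, 0 < e -> exists M, forall x, x <= M -> G x < e) /\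
  (forall e, 0 < e -> exists M, forall x, M <= x -> 1 - e < G x).

(* Gp, Gm are the conditional CDFs of a private log-likelihood ratio L:
   the law of L under theta=+1 has density e^x w.r.t. its law under
   theta=-1, i.e. for every interval (a,b],
   e^a * mu_-((a,b]) <= mu_+((a,b]) <= e^b * mu_-((a,b]). *)
Definition llr_pair (Gp Gm : R -> R) : Prop :=
  forall a b, a < b ->
    exp a * (Gm b - Gm a) <= Gp b - Gp a /\
    Gp b - Gp a <= exp b * (Gm b - Gm a).

(* Unbounded signals: for every M, P(L > M) > 0 and P(L < -M) > 0,
   where P is the unconditional law (theta uniform). *)
Definition unbounded_signals (Gp Gm : R -> R) : Prop :=
  forall M, 0 < 1 - (Gp M + Gm M) / 2 /\
            exists x, x < - M /\ 0 < (Gp x + Gm x) / 2.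

Definition left_tail_convex_differentiable (G : R -> R) : Prop :=
  exists x0,
    (forall x y l, x < x0 -> y < x0 -> 0 <= l <= 1 ->
        G (l * x + (1 - l) * y) <= l * G x + (1 - l) * G y) /\
    (forall x, x < x0 -> exists d, derivable_pt_lim G x d).

Definition Dplus (Gp Gm : R -> R) (x : R) : R :=
  ln ((1 - Gp (- x)) / (1 - Gm (- x))).
Definition Dminus (Gp Gm : R -> R) (x : R) : R :=
  ln (Gp (- x) / Gm (- x)).

(* Actions: a i = true means a_{i+1} = +1, false means a_{i+1} = -1.
   ell Gp Gm a n = ell_{n+1} (public log-likelihood ratio after
   observing a_1, ..., a_n); in particular ell Gp Gm a 0 = ell_1 = 0. *)
Fixpoint ell (Gp Gm : R -> R) (a : nat -> bool) (n : nat) : R :=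
  match n with
  | O => 0
  | S k => let l := ell Gp Gm a k in
           if a k then l + Dplus Gp Gm l else l + Dminus Gp Gm l
  end.

(* P_+(a_t = b | a_1..a_{t-1}) when the public LLR is l:
   a_t = +1 iff l + L_t > 0, L_t ~ G_+ under theta = +1. *)
Definition step_prob (Gp : R -> R) (b : bool) (l : R) : R :=
  if b then 1 - Gp (- l) else Gp (- l).

Fixpoint path_prob (Gp Gm : R -> R) (a : nat -> bool) (n : nat) : R :=
  match n with
  | O => 1
  | S k => path_prob Gp Gm a k * step_prob Gp (a k) (ell Gp Gm a k)
  end.

Fixpoint all_seqs (n : nat) : list (list bool) :=
  match n with
  | O => nil :: nil
  | S k => flat_map (fun s => (true :: s) :: (false :: s) :: nil) (all_seqs k)
  end.

Definition seq_fun (s : list bool) : nat -> bool := fun i => nth i s false.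

Definition deviates (Gp Gm f : R -> R) (eps : R) (a : nat -> bool) (n : nat)
  : bool :=
  if Rlt_dec eps (Rabs (ell Gp Gm a n / f (INR (S n)) - 1)) then true
  else false.

Definition deviates_between (Gp Gm f : R -> R) (eps : R) (a : nat -> bool)
  (N M : nat) : bool :=
  existsb (deviates Gp Gm f eps a) (seq N (S M - N)).

(* P_+( exists n in [N, M], |ell_{n+1}/f(n+1) - 1| > eps ). *)
Definition prob_deviation (Gp Gm f : R -> R) (eps : R) (N M : nat) : R :=
  fold_right Rplus 0
    (map (fun s => let a := seq_fun s in
                   if deviates_between Gp Gm f eps a N M
                   then path_prob Gp Gm a M else 0)
         (all_seqs M)).

(* ell_t / f(t) -> 1 P_+-almost surely, expressed through the
   finite-dimensional laws: for every eps > 0,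
   P_+(sup_{t >= N} |ell_t/f(t) - 1| > eps) -> 0 as N -> infinity. *)
Definition ratio_tends_to_one_as (Gp Gm f : R -> R) : Prop :=
  forall eps, 0 < eps -> forall delta, 0 < delta ->
    exists N : nat, forall M : nat, (N <= M)%nat ->
      prob_deviation Gp Gm f eps N M < delta.

(* Main.v *)
Require Import Defs.
From Stdlib Require Import Reals Lra List Psatz ZArith Lia FunctionalExtensionality.
Open Scope R_scope.

Lemma le_eps (a b : R) : (forall e, 0 < e -> a <= b + e) -> a <= b.
Proof.
  intro H. destruct (Rle_dec a b) as [h|h]; auto.
  assert (H1 := H ((a - b)/2) ltac:(lra)). lra.
Qed.

Lemma exp_le (x y : R) : x <= y -> exp x <= exp y.
Proof.
  intro h. destruct (Req_dec x y) as [->|n]; [lra|].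
  left; apply exp_increasing; lra.
Qed.

Lemma ln_le (x y : R) : 0 < x -> x <= y -> ln x <= ln y.
Proof.
  intros hx h. destruct (Req_dec x y) as [->|n]; [lra|].
  left; apply ln_increasing; lra.
Qed.

Lemma ln_div' (x y : R) : 0 < x -> 0 < y -> ln (x / y) = ln x - ln y.
Proof.
  intros hx hy. unfold Rdiv. rewrite ln_mult; [|lra|apply Rinv_0_lt_compat; lra].
  rewrite ln_Rinv; lra.
Qed.

Lemma ln_le_sub1 (x : R) : 0 < x -> ln x <= x - 1.
Proof.
  intro hx. pose proof (exp_ineq1_le (ln x)). rewrite exp_ln in H; lra.
Qed.

Lemma nat_above (r : R) : exists n : nat, r < INR n.
Proof.
  destruct (archimed r) as [h1 h2].
  destruct (Z_le_gt_dec 0 (up r)) as [hz|hz].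
  - exists (Z.to_nat (up r)). rewrite INR_IZR_INZ. rewrite Z2Nat.id; [lra|lia].
  - exists 0%nat. simpl. apply Rlt_trans with (IZR (up r)); [lra|].
    apply IZR_lt. lia.
Qed.


Definition mono (G : R -> R) := forall x y, x <= y -> G x <= G y.

Lemma G_nonneg (G G' : R -> R) : is_cdf G -> is_cdf G' ->
  (forall M, exists x, x < - M /\ 0 < (G x + G' x) / 2) -> forall y, 0 <= G' y.
Proof.
  intros [m1 [l1 r1]] [m2 [l2 r2]] U y.
  destruct (Rle_dec 0 (G' y)) as [h|h]; auto. exfalso.
  destruct (l1 (- G' y) ltac:(lra)) as [M HM].
  destruct (U (- Rmin y M)) as [x [hx1 hx2]].
  assert (x <= y) by (pose proof (Rmin_l y M); lra).
  assert (x <= M) by (pose proof (Rmin_r y M); lra).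
  pose proof (m2 _ _ H). pose proof (HM x H0). lra.
Qed.

Lemma G_le1 (G G' : R -> R) : is_cdf G -> is_cdf G' ->
  (forall M, 0 < 1 - (G M + G' M) / 2) -> forall y, G' y <= 1.
Proof.
  intros [m1 [l1 r1]] [m2 [l2 r2]] U y.
  destruct (Rle_dec (G' y) 1) as [h|h]; auto. exfalso.
  destruct (r1 (G' y - 1) ltac:(lra)) as [M HM].
  pose (x := Rmax y M).
  assert (y <= x) by apply Rmax_l. assert (M <= x) by apply Rmax_r.
  pose proof (m2 _ _ H). pose proof (HM x H0). pose proof (U x). lra.
Qed.

Record Nice (Gp Gm : R -> R) : Prop := {
  n_mp : mono Gp; n_mm : mono Gm;
  n_lp : forall e, 0 < e -> exists M, forall x, x <= M -> Gp x < e;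
  n_lm : forall e, 0 < e -> exists M, forall x, x <= M -> Gm x < e;
  n_gm : forall y, 0 < Gm y < 1;
  n_gp : forall y, 0 < Gp y < 1;
  n_up : forall y, Gp y <= exp y * Gm y;
  n_lo : forall y, exp y * (1 - Gm y) <= 1 - Gp y;
  n_llr : llr_pair Gp Gm
}.

Lemma nice_of Gp Gm : is_cdf Gp -> is_cdf Gm -> llr_pair Gp Gm ->
  unbounded_signals Gp Gm -> Nice Gp Gm.
Proof.
  intros Cp Cm L U.
  assert (U1 : forall M, 0 < 1 - (Gp M + Gm M) / 2) by (intro M; apply (U M)).
  assert (U2 : forall M, exists x, x < - M /\ 0 < (Gp x + Gm x) / 2) by (intro M; apply (U M)).
  assert (U1' : forall M, 0 < 1 - (Gm M + Gp M) / 2) by (intro M; pose proof (U1 M); lra).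
  assert (U2' : forall M, exists x, x < - M /\ 0 < (Gm x + Gp x) / 2)
    by (intro M; destruct (U2 M) as [x [h1 h2]]; exists x; split; lra).
  pose proof (G_nonneg _ _ Cp Cm U2) as Pm0.
  pose proof (G_nonneg _ _ Cm Cp U2') as Pp0.
  pose proof (G_le1 _ _ Cp Cm U1) as Pm1.
  pose proof (G_le1 _ _ Cm Cp U1') as Pp1.
  destruct Cp as [mp [lp rp]], Cm as [mm [lm rm]].
  assert (UP : forall y, Gp y <= exp y * Gm y).
  { intro y. apply le_eps. intros e he.
    destruct (lp e he) as [M HM].
    pose (a := Rmin (y - 1) M).
    assert (a <= y - 1) by apply Rmin_l. assert (a <= M) by apply Rmin_r.
    destruct (L a y ltac:(lra)) as [_ h2].
    pose proof (HM a H0). pose proof (Pm0 a). pose proof (exp_pos y). nra. }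
  assert (LO : forall y, exp y * (1 - Gm y) <= 1 - Gp y).
  { intro y. pose proof (exp_pos y). apply le_eps. intros e he.
    destruct (rm (e / exp y) ltac:(apply Rdiv_lt_0_compat; lra)) as [M HM].
    pose (b := Rmax (y + 1) M).
    assert (y + 1 <= b) by apply Rmax_l. assert (M <= b) by apply Rmax_r.
    destruct (L y b ltac:(lra)) as [h1 _].
    pose proof (HM b H1). pose proof (Pp1 b).
    assert (exp y * (e / exp y) = e) by (field; lra). nra. }
  assert (GMP : forall y, 0 < Gm y).
  { intro y. destruct (U2 (- y)) as [x [h1 h2]].
    pose proof (UP x). pose proof (exp_pos x). pose proof (mm x y ltac:(lra)). nra. }
  assert (GM1 : forall y, Gm y < 1).
  { intro y. destruct (Rlt_dec (Gm y) 1) as [h|h]; auto. exfalso.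
    assert (Gm y = 1) by (pose proof (Pm1 y); lra).
    assert (1 <= Gp y).
    { apply le_eps. intros e he. destruct (rp e he) as [M HM].
      pose (b := Rmax (y + 1) M).
      assert (hb1 : y + 1 <= b) by apply Rmax_l. assert (hb2 : M <= b) by apply Rmax_r.
      destruct (L y b ltac:(lra)) as [_ h2]. pose proof (HM b hb2).
      pose proof (Pm1 b). pose proof (exp_pos b). pose proof (mm y b ltac:(lra)). nra. }
    pose proof (U1 y). lra. }
  assert (GPP : forall y, 0 < Gp y).
  { intro y. destruct (lm (Gm y / 2) ltac:(pose proof (GMP y); lra)) as [M HM].
    pose (a := Rmin (y - 1) M).
    assert (ha1 : a <= y - 1) by apply Rmin_l. assert (ha2 : a <= M) by apply Rmin_r.
    destruct (L a y ltac:(lra)) as [h1 _]. pose proof (HM a ha2).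
    pose proof (Pp0 a). pose proof (exp_pos a). pose proof (GMP y). nra. }
  assert (GP1 : forall y, Gp y < 1).
  { intro y. pose proof (LO y). pose proof (GM1 y). pose proof (exp_pos y). nra. }
  constructor; auto.
Qed.

Definition gdiff (Gp Gm : R -> R) y := Gm y - Gp y.

Lemma g_mono_neg Gp Gm : Nice Gp Gm -> forall a b, a <= b <= 0 -> gdiff Gp Gm a <= gdiff Gp Gm b.
Proof.
  intros N a b hab. unfold gdiff. destruct (Req_dec a b) as [->|n]; [lra|].
  destruct (n_llr _ _ N a b ltac:(lra)) as [_ h2].
  pose proof (exp_le b 0 ltac:(lra)). rewrite exp_0 in H.
  pose proof (n_mm _ _ N a b ltac:(lra)). pose proof (exp_pos b). nra.
Qed.

Lemma g_mono_pos Gp Gm : Nice Gp Gm -> forall a b, 0 <= a <= b -> gdiff Gp Gm b <= gdiff Gp Gm a.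
Proof.
  intros N a b hab. unfold gdiff. destruct (Req_dec a b) as [->|n]; [lra|].
  destruct (n_llr _ _ N a b ltac:(lra)) as [h1 _].
  pose proof (exp_le 0 a ltac:(lra)). rewrite exp_0 in H.
  pose proof (n_mm _ _ N a b ltac:(lra)). nra.
Qed.

Lemma g_pos Gp Gm : Nice Gp Gm -> forall y, 0 < gdiff Gp Gm y.
Proof.
  intros N.
  assert (neg : forall y, y < 0 -> 0 < gdiff Gp Gm y).
  { intros y hy. unfold gdiff. pose proof (n_up _ _ N y). pose proof (n_gm _ _ N y).
    pose proof (exp_increasing y 0 hy). rewrite exp_0 in H1. nra. }
  intro y. destruct (Rlt_dec y 0) as [h|h]; auto.
  destruct (Req_dec y 0) as [->|h'].
  - pose proof (g_mono_neg _ _ N (-1) 0 ltac:(lra)). pose proof (neg (-1) ltac:(lra)). lra.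
  - unfold gdiff. pose proof (n_lo _ _ N y). pose proof (n_gm _ _ N y).
    pose proof (exp_increasing 0 y ltac:(lra)). rewrite exp_0 in H1. nra.
Qed.

Lemma g_min Gp Gm : Nice Gp Gm -> forall lo hi y, lo <= y <= hi ->
  Rmin (gdiff Gp Gm lo) (gdiff Gp Gm hi) <= gdiff Gp Gm y.
Proof.
  intros N lo hi y h. destruct (Rle_dec y 0).
  - pose proof (g_mono_neg _ _ N lo y ltac:(lra)). pose proof (Rmin_l (gdiff Gp Gm lo) (gdiff Gp Gm hi)). lra.
  - pose proof (g_mono_pos _ _ N y hi ltac:(lra)). pose proof (Rmin_r (gdiff Gp Gm lo) (gdiff Gp Gm hi)). lra.
Qed.

Lemma ell_ext Gp Gm a a' n : (forall i, (i < n)%nat -> a i = a' i) ->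
  ell Gp Gm a n = ell Gp Gm a' n.
Proof.
  induction n as [|n IH]; intro H; simpl; auto.
  rewrite IH by (intros; apply H; lia). rewrite (H n) by lia. reflexivity.
Qed.

Lemma path_prob_ext Gp Gm a a' n : (forall i, (i < n)%nat -> a i = a' i) ->
  path_prob Gp Gm a n = path_prob Gp Gm a' n.
Proof.
  induction n as [|n IH]; intro H; simpl; auto.
  rewrite IH by (intros; apply H; lia). rewrite (H n) by lia.
  rewrite (ell_ext Gp Gm a a' n) by (intros; apply H; lia). reflexivity.
Qed.

Lemma seq_fun_app1 s b i : (i < length s)%nat -> seq_fun (s ++ b :: nil) i = seq_fun s i.
Proof. intro h. unfold seq_fun. apply app_nth1; auto. Qed.

Lemma seq_fun_app2 s b : seq_fun (s ++ b :: nil) (length s) = b.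
Proof. unfold seq_fun. apply nth_middle. Qed.

Definition Lv Gp Gm (s : list bool) := ell Gp Gm (seq_fun s) (length s).
Definition Pv Gp Gm (s : list bool) := path_prob Gp Gm (seq_fun s) (length s).

Lemma ell_app_prefix Gp Gm s b k : (k <= length s)%nat ->
  ell Gp Gm (seq_fun (s ++ b :: nil)) k = ell Gp Gm (seq_fun s) k.
Proof. intro h. apply ell_ext. intros i hi. apply seq_fun_app1. lia. Qed.

Definition stepL Gp Gm (b : bool) (l : R) :=
  if b then l + Defs.Dplus Gp Gm l else l + Defs.Dminus Gp Gm l.

Lemma Lv_app Gp Gm s b : Lv Gp Gm (s ++ b :: nil) = stepL Gp Gm b (Lv Gp Gm s).
Proof.
  unfold Lv. rewrite length_app. simpl. rewrite Nat.add_1_r. simpl.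
  rewrite ell_app_prefix by lia. rewrite seq_fun_app2. reflexivity.
Qed.

Lemma Pv_app Gp Gm s b : Pv Gp Gm (s ++ b :: nil) = Pv Gp Gm s * step_prob Gp b (Lv Gp Gm s).
Proof.
  unfold Pv, Lv. rewrite length_app. simpl. rewrite Nat.add_1_r. simpl.
  rewrite ell_app_prefix by lia. rewrite seq_fun_app2.
  rewrite (path_prob_ext Gp Gm (seq_fun (s ++ b :: nil)) (seq_fun s)) by
    (intros; apply seq_fun_app1; lia). reflexivity.
Qed.

Lemma all_seqs_len n s : In s (all_seqs n) -> length s = n.
Proof.
  revert s; induction n as [|n IH]; intros s H; simpl in H.
  - destruct H as [<-|[]]; reflexivity.
  - apply in_flat_map in H. destruct H as [x [hx hs]].
    simpl in hs. destruct hs as [<-|[<-|[]]]; simpl; rewrite IH; auto.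
Qed.

Lemma all_seqs_in n s : length s = n -> In s (all_seqs n).
Proof.
  revert s; induction n as [|n IH]; intros s H; simpl.
  - destruct s; [left; auto|discriminate].
  - destruct s as [|b s]; [discriminate|]. simpl in H.
    apply in_flat_map. exists s. split; [apply IH; lia|].
    destruct b; simpl; auto.
Qed.

Definition sum_all (n : nat) (F : list bool -> R) : R :=
  fold_right Rplus 0 (map F (all_seqs n)).

Lemma sum_flat (F : list bool -> R) (l : list (list bool)) :
  fold_right Rplus 0 (map F (flat_map (fun s => (true :: s) :: (false :: s) :: nil) l))
  = fold_right Rplus 0 (map (fun s => F (true :: s) + F (false :: s)) l).
Proof.
  induction l as [|x l IH]; simpl; auto. rewrite IH. ring.
Qed.

Lemma sum_all_cons n F : sum_all (S n) F = sum_all n (fun s => F (true :: s) + F (false :: s)).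
Proof. unfold sum_all. simpl. apply sum_flat. Qed.

Lemma sum_all_ext n F G : (forall s, length s = n -> F s = G s) -> sum_all n F = sum_all n G.
Proof.
  intro H. unfold sum_all.
  assert (forall s, In s (all_seqs n) -> F s = G s) by (intros; apply H; apply all_seqs_len; auto).
  revert H0. generalize (all_seqs n). intro l; induction l as [|x l IH]; intro H0; simpl; auto.
  rewrite H0 by (left; auto). rewrite IH; auto. intros; apply H0; right; auto.
Qed.

Lemma sum_all_le n F G : (forall s, length s = n -> F s <= G s) -> sum_all n F <= sum_all n G.
Proof.
  intro H. unfold sum_all.
  assert (forall s, In s (all_seqs n) -> F s <= G s) by (intros; apply H; apply all_seqs_len; auto).
  revert H0. generalize (all_seqs n). intro l; induction l as [|x l IH]; intro H0; simpl; [lra|].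
  pose proof (H0 x (or_introl eq_refl)). pose proof (IH (fun s h => H0 s (or_intror h))). lra.
Qed.

Lemma sum_all_plus n F G : sum_all n (fun s => F s + G s) = sum_all n F + sum_all n G.
Proof.
  unfold sum_all. generalize (all_seqs n). intro l; induction l; simpl; [lra|]. rewrite IHl. ring.
Qed.

Lemma sum_all_scal n c F : sum_all n (fun s => c * F s) = c * sum_all n F.
Proof.
  unfold sum_all. generalize (all_seqs n). intro l; induction l; simpl; [lra|]. rewrite IHl. ring.
Qed.

Lemma sum_all_S n F : sum_all (S n) F = sum_all n (fun s => F (s ++ true :: nil) + F (s ++ false :: nil)).
Proof.
  revert F; induction n as [|n IH]; intro F.
  - unfold sum_all. simpl. ring.
  - rewrite sum_all_cons. rewrite IH. rewrite sum_all_cons.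
    apply sum_all_ext. intros s _. simpl. ring.
Qed.

Definition E Gp Gm n (F : list bool -> R) := sum_all n (fun s => Pv Gp Gm s * F s).

Lemma E_S Gp Gm n F : E Gp Gm (S n) F = sum_all n (fun s => Pv Gp Gm s *
   (step_prob Gp true (Lv Gp Gm s) * F (s ++ true :: nil) +
    step_prob Gp false (Lv Gp Gm s) * F (s ++ false :: nil))).
Proof.
  unfold E. rewrite sum_all_S. apply sum_all_ext. intros s _.
  rewrite !Pv_app. ring.
Qed.

Lemma E_le Gp Gm n F G : Nice Gp Gm -> (forall s, length s = n -> F s <= G s) -> E Gp Gm n F <= E Gp Gm n G.
Proof.
  intros N H. unfold E. apply sum_all_le. intros s hs.
  assert (0 <= Pv Gp Gm s).
  { unfold Pv. generalize (length s). intro k. induction k; simpl; [lra|].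
    apply Rmult_le_pos; auto. unfold step_prob. destruct (seq_fun s k);
    pose proof (n_gp _ _ N (- ell Gp Gm (seq_fun s) k)); lra. }
  apply Rmult_le_compat_l; auto.
Qed.

Lemma Pv_nonneg Gp Gm s : Nice Gp Gm -> 0 <= Pv Gp Gm s.
Proof.
  intros N. unfold Pv. generalize (length s). intro k. induction k; simpl; [lra|].
  apply Rmult_le_pos; auto. unfold step_prob. destruct (seq_fun s k);
  pose proof (n_gp _ _ N (- ell Gp Gm (seq_fun s) k)); lra.
Qed.

Lemma E_plus Gp Gm n F G : E Gp Gm n (fun s => F s + G s) = E Gp Gm n F + E Gp Gm n G.
Proof.
  unfold E. rewrite <- sum_all_plus. apply sum_all_ext. intros; ring.
Qed.

Lemma E_scal Gp Gm n c F : E Gp Gm n (fun s => c * F s) = c * E Gp Gm n F.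
Proof.
  unfold E. rewrite <- sum_all_scal. apply sum_all_ext. intros; ring.
Qed.

Lemma E_0 Gp Gm F : E Gp Gm 0 F = F nil.
Proof. unfold E, sum_all, Pv. simpl. ring. Qed.

Lemma E_one Gp Gm n : E Gp Gm n (fun _ => 1) = 1.
Proof.
  induction n as [|n IH]. - rewrite E_0; auto.
  - rewrite E_S. transitivity (E Gp Gm n (fun _ => 1)); [|exact IH].
    unfold E. apply sum_all_ext. intros s _.
    unfold step_prob; simpl; ring.
Qed.

Lemma E_tower Gp Gm k (H : R -> R) M : (k <= M)%nat ->
  E Gp Gm M (fun s => H (ell Gp Gm (seq_fun s) k)) = E Gp Gm k (fun s => H (Lv Gp Gm s)).
Proof.
  intro hk. induction M as [|M IH].
  - assert (k = 0%nat) by lia. subst. unfold E. apply sum_all_ext. intros s hs.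
    unfold Lv. rewrite hs. reflexivity.
  - destruct (Nat.eq_dec k (S M)) as [->|hne].
    + unfold E. apply sum_all_ext. intros s hs. unfold Lv. rewrite hs. reflexivity.
    + rewrite E_S. rewrite <- IH by lia. unfold E. apply sum_all_ext. intros s hs.
      rewrite !ell_app_prefix by lia. unfold step_prob; simpl; ring.
Qed.

Lemma sqrt_bound p q A B : 0 < p < 1 -> 0 < q < 1 -> 0 <= A -> 0 <= B ->
  A * A = p * q -> B * B = (1 - p) * (1 - q) -> A + B <= 1 - (p - q) ^ 2 / 4.
Proof.
  intros hp hq hA hB eA eB.
  pose proof (pow2_ge_0 (p - q)) as h0.
  assert (h1 : 0 <= (p - q) ^ 2 * (1 - (p + q) / 2)) by (apply Rmult_le_pos; lra).
  assert (h2 : 0 <= (p - q) ^ 2 * (1 - (2 - p - q) / 2)) by (apply Rmult_le_pos; lra).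
  assert (h3 : 0 <= (p - q) ^ 4) by (replace ((p-q)^4) with (((p-q)^2)^2) by ring; apply pow2_ge_0).
  assert (hd : (p - q) ^ 2 <= 1) by nra.
  assert (A <= (p + q) / 2 - (p - q) ^ 2 / 8).
  { assert (0 <= (p + q) / 2 - (p - q) ^ 2 / 8) by nra.
    apply Rsqr_incr_0_var; unfold Rsqr; [|auto]. rewrite eA. nra. }
  assert (B <= (2 - p - q) / 2 - (p - q) ^ 2 / 8).
  { assert (0 <= (2 - p - q) / 2 - (p - q) ^ 2 / 8) by nra.
    apply Rsqr_incr_0_var; unfold Rsqr; [|auto]. rewrite eB. nra. }
  lra.
Qed.

Lemma exp_neg_ln x r : 0 < r -> exp (- (x + ln r)) = exp (- x) / r.
Proof.
  intro hr. replace (- (x + ln r)) with (- x + - ln r) by ring.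
  rewrite exp_plus, (exp_Ropp (ln r)), exp_ln; auto.
Qed.

Lemma half_sq r : 0 < r -> exp (- ln r / 2) * exp (- ln r / 2) = / r.
Proof.
  intro hr. rewrite <- exp_plus. replace (- ln r / 2 + - ln r / 2) with (- ln r) by field.
  rewrite exp_Ropp, exp_ln; auto.
Qed.

Lemma Z_step Gp Gm x : Nice Gp Gm ->
  step_prob Gp true x * exp (- stepL Gp Gm true x) +
  step_prob Gp false x * exp (- stepL Gp Gm false x) = exp (- x).
Proof.
  intro N. unfold step_prob, stepL, Defs.Dplus, Defs.Dminus.
  pose proof (n_gp _ _ N (- x)). pose proof (n_gm _ _ N (- x)).
  rewrite !exp_neg_ln.
  - field. lra.
  - apply Rdiv_lt_0_compat; lra.
  - apply Rdiv_lt_0_compat; lra.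
Qed.

Lemma stepL_false_le0 Gp Gm x : Nice Gp Gm -> stepL Gp Gm false x <= 0.
Proof.
  intro N. unfold stepL, Defs.Dminus.
  pose proof (n_gp _ _ N (- x)). pose proof (n_gm _ _ N (- x)). pose proof (n_up _ _ N (- x)).
  assert (Gp (- x) / Gm (- x) <= exp (- x)).
  { apply (Rmult_le_reg_r (Gm (-x))); [lra|]. unfold Rdiv. rewrite Rmult_assoc, Rinv_l by lra. lra. }
  pose proof (ln_le (Gp (- x) / Gm (- x)) _ ltac:(apply Rdiv_lt_0_compat; lra) H2). rewrite ln_exp in H3. lra.
Qed.

Lemma Y_step Gp Gm x : Nice Gp Gm ->
  step_prob Gp true x * exp (- stepL Gp Gm true x / 2) +
  step_prob Gp false x * exp (- stepL Gp Gm false x / 2)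
  <= exp (- x / 2) * (1 - gdiff Gp Gm (- x) ^ 2 / 4).
Proof.
  intro N. unfold step_prob, stepL, Defs.Dplus, Defs.Dminus, gdiff.
  pose proof (n_gp _ _ N (- x)). pose proof (n_gm _ _ N (- x)).
  set (p := 1 - Gp (- x)). set (q := 1 - Gm (- x)).
  assert (e1 : forall r, exp (- (x + ln r) / 2) = exp (- x / 2) * exp (- ln r / 2)).
  { intro r. rewrite <- exp_plus. f_equal. field. }
  rewrite !e1.
  assert (hr1 : 0 < p / q) by (apply Rdiv_lt_0_compat; unfold p, q; lra).
  assert (hr2 : 0 < Gp (- x) / Gm (- x)) by (apply Rdiv_lt_0_compat; lra).
  pose proof (half_sq _ hr1). pose proof (half_sq _ hr2).
  set (w1 := exp (- ln (p / q) / 2)) in *. set (w2 := exp (- ln (Gp (- x) / Gm (- x)) / 2)) in *.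
  assert (0 < w1) by apply exp_pos. assert (0 < w2) by apply exp_pos.
  pose proof (exp_pos (- x / 2)).
  assert (hb := sqrt_bound p q (p * w1) (Gp (- x) * w2) ltac:(unfold p; lra) ltac:(unfold q; lra)
    ltac:(apply Rmult_le_pos; unfold p; lra) ltac:(apply Rmult_le_pos; lra)).
  assert (p * w1 * (p * w1) = p * q).
  { replace (p * w1 * (p * w1)) with (p * p * (w1 * w1)) by ring. rewrite H1.
    field. split; unfold p, q; lra. }
  assert (Gp (- x) * w2 * (Gp (- x) * w2) = (1 - p) * (1 - q)).
  { replace (Gp (- x) * w2 * (Gp (- x) * w2)) with (Gp (-x) * Gp (-x) * (w2 * w2)) by ring. rewrite H2.
    unfold p, q. field. lra. }
  specialize (hb H6 H7).
  replace (p - q) with (Gm (- x) - Gp (- x)) in hb by (unfold p, q; ring).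
  nra.
Qed.

Lemma Lv_nil Gp Gm : Lv Gp Gm nil = 0.
Proof. reflexivity. Qed.

Lemma E_Z Gp Gm n : Nice Gp Gm -> E Gp Gm n (fun s => exp (- Lv Gp Gm s)) = 1.
Proof.
  intro N. induction n as [|n IH].
  - rewrite E_0, Lv_nil, Ropp_0, exp_0; auto.
  - rewrite E_S. rewrite <- IH. unfold E. apply sum_all_ext. intros s _.
    rewrite !Lv_app. rewrite (Z_step _ _ _ N). reflexivity.
Qed.

Definition ind1 (L0 v : R) : R := if Rle_dec v (- L0) then 1 else 0.
Definition ind2 (L0 v : R) : R :=
  if Rlt_dec (- L0) v then (if Rle_dec v L0 then 1 else 0) else 0.

Lemma markov Gp Gm n L0 : Nice Gp Gm ->
  E Gp Gm n (fun s => ind1 L0 (Lv Gp Gm s)) <= exp (- L0).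
Proof.
  intro N.
  apply Rle_trans with (E Gp Gm n (fun s => exp (- L0) * exp (- Lv Gp Gm s))).
  - apply E_le; auto. intros s _. unfold ind1. destruct (Rle_dec (Lv Gp Gm s) (- L0)).
    + rewrite <- exp_plus. rewrite <- exp_0. apply exp_le. lra.
    + pose proof (exp_pos (- L0)). pose proof (exp_pos (- Lv Gp Gm s)). nra.
  - rewrite E_scal, E_Z; auto. lra.
Qed.

Definition Yf Gp Gm (s : list bool) := exp (- Lv Gp Gm s / 2).

Lemma Y_dec Gp Gm n L0 : Nice Gp Gm ->
  let g := Rmin (gdiff Gp Gm (- L0)) (gdiff Gp Gm L0) in
  E Gp Gm (S n) (Yf Gp Gm) <= E Gp Gm n (Yf Gp Gm)
     - (exp (- L0 / 2) * g ^ 2 / 4) * E Gp Gm n (fun s => ind2 L0 (Lv Gp Gm s)).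
Proof.
  intros N g.
  apply Rle_trans with (E Gp Gm n (fun s => Yf Gp Gm s +
     (-1 * (exp (- L0 / 2) * g ^ 2 / 4)) * ind2 L0 (Lv Gp Gm s))).
  2:{ rewrite E_plus, E_scal. lra. }
  rewrite E_S. unfold E. apply sum_all_le. intros s _.
  pose proof (Pv_nonneg Gp Gm s N). unfold Yf. rewrite !Lv_app.
  pose proof (Y_step Gp Gm (Lv Gp Gm s) N).
  set (v := Lv Gp Gm s) in *.
  assert (exp (- v / 2) * (1 - gdiff Gp Gm (- v) ^ 2 / 4) <=
          exp (- v / 2) + -1 * (exp (- L0 / 2) * g ^ 2 / 4 * ind2 L0 v)).
  { unfold ind2. pose proof (exp_pos (- v / 2)).
    pose proof (pow2_ge_0 (gdiff Gp Gm (- v))).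
    destruct (Rlt_dec (- L0) v); [destruct (Rle_dec v L0)|].
    - assert (gg : g <= gdiff Gp Gm (- v)) by (apply g_min; auto; lra).
      assert (0 < g) by (unfold g; apply Rmin_case; apply g_pos; auto).
      assert (exp (- L0 / 2) <= exp (- v / 2)) by (apply exp_le; lra).
      assert (g ^ 2 <= gdiff Gp Gm (- v) ^ 2) by nra.
      pose proof (exp_pos (- L0 / 2)). nra.
    - nra.
    - nra. }
  apply Rmult_le_compat_l with (r := Pv Gp Gm s) in H1; auto.
  apply Rmult_le_compat_l with (r := Pv Gp Gm s) in H0; auto.
  unfold stepL in *. lra.
Qed.

Lemma exists_small (u Yv : nat -> R) k d (N : nat) :
  0 < k -> (forall n, Yv (S n) <= Yv n - k * u n) -> Yv 0%nat <= 1 ->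
  (forall n, 0 <= Yv n) -> 1 < INR N * k * d ->
  exists n, (n < N)%nat /\ u n < d.
Proof.
  intros hk hY h0 hpos hN.
  assert (forall m, (exists n, (n < m)%nat /\ u n < d) \/ Yv m <= 1 - INR m * k * d).
  { induction m as [|m IH].
    - right. simpl. lra.
    - destruct IH as [[n [h1 h2]]|IH].
      + left. exists n. split; [lia|auto].
      + destruct (Rlt_dec (u m) d).
        * left. exists m. split; [lia|auto].
        * right. rewrite S_INR. pose proof (hY m). nra. }
  destruct (H N) as [h|h]; auto. pose proof (hpos N). lra.
Qed.

Lemma E_nonneg Gp Gm n F : Nice Gp Gm -> (forall s, 0 <= F s) -> 0 <= E Gp Gm n F.
Proof.
  intros N H. unfold E. apply Rle_trans with (sum_all n (fun _ => 0)).
  - unfold sum_all. generalize (all_seqs n). intro l. induction l; simpl; lra.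
  - apply sum_all_le. intros s _. apply Rmult_le_pos; auto. apply Pv_nonneg; auto.
Qed.

Lemma learning Gp Gm L0 d : Nice Gp Gm -> 0 < d ->
  exists N0 : nat, E Gp Gm N0 (fun s => ind2 L0 (Lv Gp Gm s)) < d.
Proof.
  intros N hd.
  set (g := Rmin (gdiff Gp Gm (- L0)) (gdiff Gp Gm L0)).
  assert (0 < g) by (unfold g; apply Rmin_case; apply g_pos; auto).
  set (k := exp (- L0 / 2) * g ^ 2 / 4).
  assert (0 < k) by (unfold k; pose proof (exp_pos (- L0 / 2)); pose proof (pow_lt g 2 H); nra).
  destruct (nat_above (1 / (k * d))) as [M hM].
  assert (1 < INR M * k * d).
  { assert (0 < k * d) by nra. unfold Rdiv in hM. rewrite Rmult_1_l in hM.
    apply Rmult_lt_compat_r with (r := k * d) in hM; auto.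
    rewrite Rinv_l in hM by lra. lra. }
  destruct (exists_small (fun n => E Gp Gm n (fun s => ind2 L0 (Lv Gp Gm s)))
    (fun n => E Gp Gm n (Yf Gp Gm)) k d M H0) as [n [_ hn]]; auto.
  - intro n. apply Y_dec; auto.
  - rewrite E_0. unfold Yf. rewrite Lv_nil. replace (-0/2) with 0 by field. rewrite exp_0. lra.
  - intro n. apply E_nonneg; auto. intro s. unfold Yf. left; apply exp_pos.
  - exists n. auto.
Qed.

Lemma existsb_ext_in {A} (f g : A -> bool) l : (forall x, In x l -> f x = g x) ->
  existsb f l = existsb g l.
Proof.
  induction l as [|a l IH]; intro H; simpl; auto.
  rewrite H by (left; auto). rewrite IH; auto. intros; apply H; right; auto.
Qed.

Definition bad (N0 : nat) (s : list bool) : bool :=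
  existsb (fun i => negb (seq_fun s i)) (seq N0 (length s - N0)).

Lemma bad_app N0 s b : (N0 <= length s)%nat -> bad N0 (s ++ b :: nil) = orb (bad N0 s) (negb b).
Proof.
  intro h. unfold bad. rewrite length_app. simpl.
  replace (length s + 1 - N0)%nat with (S (length s - N0)) by lia.
  rewrite seq_S, existsb_app. simpl.
  replace (N0 + (length s - N0))%nat with (length s) by lia.
  rewrite seq_fun_app2. rewrite Bool.orb_false_r. f_equal.
  apply existsb_ext_in. intros i hi. apply in_seq in hi. rewrite seq_fun_app1 by lia. auto.
Qed.

Lemma bad_N0 N0 s : length s = N0 -> bad N0 s = false.
Proof. intro h. unfold bad. rewrite h, Nat.sub_diag. reflexivity. Qed.

Definition Wf Gp Gm N0 L0 (s : list bool) : R :=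
  if Rlt_dec L0 (ell Gp Gm (seq_fun s) N0) then
    (if bad N0 s then 1 else exp (- Lv Gp Gm s)) else 0.

Lemma W_bound Gp Gm N0 L0 M : Nice Gp Gm -> (N0 <= M)%nat ->
  E Gp Gm M (Wf Gp Gm N0 L0) <= exp (- L0).
Proof.
  intros N hM. induction M as [|M IH].
  - assert (N0 = 0%nat) by lia. subst.
    rewrite E_0. unfold Wf. simpl. destruct (Rlt_dec L0 0).
    + rewrite Lv_nil. apply exp_le. lra.
    + left; apply exp_pos.
  - destruct (Nat.eq_dec N0 (S M)) as [<-|hne].
    + apply Rle_trans with (E Gp Gm N0 (fun _ => exp (- L0))).
      * apply E_le; auto. intros s hs. unfold Wf. rewrite bad_N0 by auto.
        replace (ell Gp Gm (seq_fun s) N0) with (Lv Gp Gm s) by (unfold Lv; rewrite hs; auto).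
        destruct (Rlt_dec L0 (Lv Gp Gm s)).
        -- apply exp_le. lra.
        -- left; apply exp_pos.
      * replace (fun _ : list bool => exp (- L0)) with (fun _ : list bool => exp (- L0) * 1)
          by (apply functional_extensionality; intros; ring).
        rewrite E_scal, E_one. lra.
    + apply Rle_trans with (E Gp Gm M (Wf Gp Gm N0 L0)); [|apply IH; lia].
      rewrite E_S. unfold E. apply sum_all_le. intros s hs.
      pose proof (Pv_nonneg Gp Gm s N). apply Rmult_le_compat_l; auto.
      unfold Wf. rewrite !ell_app_prefix by lia. rewrite !bad_app by lia.
      rewrite !Lv_app. simpl. rewrite !Bool.orb_false_r, !Bool.orb_true_r.
      pose proof (n_gp _ _ N (- Lv Gp Gm s)).
      destruct (Rlt_dec L0 (ell Gp Gm (seq_fun s) N0)); [|unfold step_prob; simpl; lra].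
      destruct (bad N0 s); unfold step_prob; simpl; [lra|].
      pose proof (Z_step Gp Gm (Lv Gp Gm s) N). unfold step_prob in H1; simpl in H1.
      pose proof (stepL_false_le0 Gp Gm (Lv Gp Gm s) N).
      assert (1 <= exp (- stepL Gp Gm false (Lv Gp Gm s))) by (rewrite <- exp_0; apply exp_le; lra).
      unfold stepL in *. nra.
Qed.

Definition hh (Gm : R -> R) x := Gm (- x).


Lemma Dp_lower Gp Gm x : Nice Gp Gm -> gdiff Gp Gm (- x) <= Defs.Dplus Gp Gm x.
Proof.
  intro N. unfold Defs.Dplus, gdiff.
  pose proof (n_gp _ _ N (- x)). pose proof (n_gm _ _ N (- x)).
  pose proof (g_pos _ _ N (- x)). unfold gdiff in H1.
  set (p := 1 - Gp (- x)) in *. set (q := 1 - Gm (- x)) in *.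
  assert (0 < p) by (unfold p; lra). assert (0 < q) by (unfold q; lra).
  assert (e : ln (p / q) = - ln (q / p)).
  { rewrite !ln_div'; auto. ring. }
  rewrite e. pose proof (ln_le_sub1 (q / p) ltac:(apply Rdiv_lt_0_compat; auto)).
  assert (q / p - 1 <= q - p).
  { unfold Rdiv. apply (Rmult_le_reg_r p); auto.
    replace ((q * / p - 1) * p) with (q - p) by (field; lra).
    assert (p <= 1) by (unfold p; lra). assert (0 < p - q) by (unfold p, q; lra). nra. }
  unfold p, q in *. lra.
Qed.

Lemma Dp_pos Gp Gm x : Nice Gp Gm -> 0 < Defs.Dplus Gp Gm x.
Proof. intro N. pose proof (Dp_lower _ _ x N). pose proof (g_pos _ _ N (- x)). lra. Qed.

Lemma Dp_lower2 Gp Gm x : Nice Gp Gm -> (1 - exp (- x)) * hh Gm x <= Defs.Dplus Gp Gm x.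
Proof.
  intro N. pose proof (Dp_lower _ _ x N). pose proof (n_up _ _ N (- x)).
  unfold gdiff, hh in *. lra.
Qed.

Lemma Dp_upper Gp Gm x : Nice Gp Gm -> Defs.Dplus Gp Gm x <= hh Gm x / (1 - hh Gm x).
Proof.
  intro N. unfold Defs.Dplus, hh.
  pose proof (n_gp _ _ N (- x)). pose proof (n_gm _ _ N (- x)).
  pose proof (ln_le_sub1 ((1 - Gp (- x)) / (1 - Gm (- x))) ltac:(apply Rdiv_lt_0_compat; lra)).
  assert ((1 - Gp (- x)) / (1 - Gm (- x)) - 1 <= Gm (- x) / (1 - Gm (- x))).
  { unfold Rdiv. apply (Rmult_le_reg_r (1 - Gm (- x))); [lra|].
    replace (((1 - Gp (- x)) * / (1 - Gm (- x)) - 1) * (1 - Gm (- x))) with (Gm (- x) - Gp (- x)) by (field; lra).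
    replace (Gm (- x) * / (1 - Gm (- x)) * (1 - Gm (- x))) with (Gm (- x)) by (field; lra). lra. }
  lra.
Qed.

Lemma hh_mono Gp Gm u v : Nice Gp Gm -> u <= v -> hh Gm v <= hh Gm u.
Proof. intros N h. unfold hh. apply (n_mm _ _ N). lra. Qed.

Lemma hh_pos Gp Gm u : Nice Gp Gm -> 0 < hh Gm u < 1.
Proof. intros N. unfold hh. apply (n_gm _ _ N). Qed.

Definition convex_below (G : R -> R) (xc : R) :=
  forall x y l, x < xc -> y < xc -> 0 <= l <= 1 ->
        G (l * x + (1 - l) * y) <= l * G x + (1 - l) * G y.

Lemma chord Gm xc y d : convex_below Gm xc -> 1 - xc < y -> 0 <= d ->
  hh Gm y - hh Gm (y + d) <= d * (hh Gm (y - 1) - hh Gm y).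
Proof.
  intros C hy hd. unfold hh.
  assert (hl : 0 <= 1 / (1 + d) <= 1).
  { split. apply Rlt_le, Rdiv_lt_0_compat; lra.
    apply (Rmult_le_reg_r (1 + d)); [lra|]. unfold Rdiv. rewrite Rmult_assoc, Rinv_l by lra. lra. }
  pose proof (C (- (y + d)) (- (y - 1)) (1 / (1 + d)) ltac:(lra) ltac:(lra) hl).
  replace (1 / (1 + d) * - (y + d) + (1 - 1 / (1 + d)) * - (y - 1)) with (- y) in H by (field; lra).
  apply (Rmult_le_compat_l (1 + d)) in H; [|lra].
  replace ((1 + d) * (1 / (1 + d) * Gm (- (y + d)) + (1 - 1 / (1 + d)) * Gm (- (y - 1))))
    with (Gm (- (y + d)) + d * Gm (- (y - 1))) in H by (field; lra).
  nra.
Qed.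

Record FH (Gm f : R -> R) (T : R) : Prop := {
  fh_pos : forall t, 0 < t -> 0 < f t;
  fh_der : forall t, T < t -> derivable_pt_lim f t (Gm (- f t)) }.

Lemma f_mvt Gm f T a b : FH Gm f T -> T < a -> a < b ->
  exists c, a < c < b /\ f b - f a = hh Gm (f c) * (b - a).
Proof.
  intros F ha hab. destruct (MVT_cor2 f (fun x => Gm (- f x)) a b hab) as [c [e hc]].
  - intros c hc. apply (fh_der _ _ _ F). lra.
  - exists c. split; auto.
Qed.

Lemma f_mono Gp Gm f T a b : Nice Gp Gm -> FH Gm f T -> T < a -> a <= b -> f a <= f b.
Proof.
  intros N F ha hab. destruct (Req_dec a b) as [->|hne]; [lra|].
  destruct (f_mvt Gm f T a b F ha ltac:(lra)) as [c [hc e]].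
  pose proof (hh_pos Gp Gm (f c) N). nra.
Qed.

Lemma f_S1 Gp Gm f T a d : Nice Gp Gm -> FH Gm f T -> T < a -> 0 <= d ->
  f (a + d) - f a <= d * hh Gm (f a).
Proof.
  intros N F ha hd. destruct (Req_dec d 0) as [->|hne].
  - rewrite Rplus_0_r. lra.
  - destruct (f_mvt Gm f T a (a + d) F ha ltac:(lra)) as [c [hc e]].
    rewrite e. pose proof (f_mono Gp Gm f T a c N F ha ltac:(lra)).
    pose proof (hh_mono Gp Gm _ _ N H). replace (a + d - a) with d by ring. nra.
Qed.

Lemma f_unb Gp Gm f T a B : Nice Gp Gm -> FH Gm f T -> T < a ->
  exists t, a < t /\ B <= f t.
Proof.
  intros N F ha.
  pose proof (hh_pos Gp Gm B N) as [hB _].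
  set (t := a + Rabs (B - f a) / hh Gm B + 1).
  assert (0 <= Rabs (B - f a) / hh Gm B) by (apply Rmult_le_pos; [apply Rabs_pos|left; apply Rinv_0_lt_compat; auto]).
  exists t. split; [unfold t; lra|].
  destruct (Rle_dec B (f t)) as [h|h]; auto. exfalso.
  destruct (f_mvt Gm f T a t F ha ltac:(unfold t; lra)) as [c [hc e]].
  assert (f c <= B) by (pose proof (f_mono Gp Gm f T c t N F ltac:(lra) ltac:(lra)); lra).
  pose proof (hh_mono Gp Gm _ _ N H0).
  assert (hh Gm B * (t - a) <= f t - f a) by (rewrite e; apply Rmult_le_compat_r; lra).
  assert (hh Gm B * (t - a) = Rabs (B - f a) + hh Gm B).
  { unfold t. field. lra. }
  pose proof (Rle_abs (B - f a)). lra.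
Qed.

Lemma f_reg Gp Gm f T T1 s t : Nice Gp Gm -> FH Gm f T -> T < T1 -> 0 < T1 -> T1 < s -> s <= t ->
  f t <= f s * (1 + (t - s) / (s - T1)).
Proof.
  intros N F h1 h2 h3 h4.
  pose proof (fh_pos _ _ _ F T1 h2).
  pose proof (f_S1 Gp Gm f T s (t - s) N F ltac:(lra) ltac:(lra)).
  replace (s + (t - s)) with t in H0 by ring.
  destruct (f_mvt Gm f T T1 s F h1 h3) as [c [hc e]].
  pose proof (f_mono Gp Gm f T c s N F ltac:(lra) ltac:(lra)).
  pose proof (hh_mono Gp Gm _ _ N H1).
  assert (hh Gm (f s) * (s - T1) <= f s) by nra.
  assert (hh Gm (f s) <= f s / (s - T1)).
  { apply (Rmult_le_reg_r (s - T1)); [lra|]. unfold Rdiv. rewrite Rmult_assoc, Rinv_l by lra. lra. }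
  assert ((t - s) * hh Gm (f s) <= (t - s) * (f s / (s - T1))) by (apply Rmult_le_compat_l; lra).
  replace (f s * (1 + (t - s) / (s - T1))) with (f s + (t - s) * (f s / (s - T1))) by (field; lra).
  lra.
Qed.

Definition GoodX Gp Gm xc (rho X : R) :=
  forall x, X <= x ->
    (1 - rho) * hh Gm x <= Defs.Dplus Gp Gm x /\
    Defs.Dplus Gp Gm x <= (1 + rho) * hh Gm x /\
    hh Gm (x - 1) <= rho / 2 /\ 1 - xc < x.

Lemma goodX_exists Gp Gm xc rho : Nice Gp Gm -> 0 < rho <= 1/6 -> exists X, GoodX Gp Gm xc rho X.
Proof.
  intros N hr.
  destruct (n_lm _ _ N (rho / 2) ltac:(lra)) as [M HM].
  exists (Rmax (- ln rho) (Rmax (1 - M) (2 - xc))).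
  intros x hx.
  pose proof (Rmax_l (- ln rho) (Rmax (1 - M) (2 - xc))).
  pose proof (Rmax_r (- ln rho) (Rmax (1 - M) (2 - xc))).
  pose proof (Rmax_l (1 - M) (2 - xc)). pose proof (Rmax_r (1 - M) (2 - xc)).
  assert (h1 : hh Gm (x - 1) <= rho / 2).
  { unfold hh. left. apply HM. lra. }
  pose proof (hh_mono Gp Gm (x - 1) x N ltac:(lra)).
  pose proof (hh_pos Gp Gm x N).
  assert (exp (- x) <= rho).
  { rewrite <- (exp_ln rho) by lra. apply exp_le. lra. }
  split; [|split; [|split; [auto|lra]]].
  - pose proof (Dp_lower2 Gp Gm x N). nra.
  - pose proof (Dp_upper Gp Gm x N).
    assert (hh Gm x / (1 - hh Gm x) <= (1 + rho) * hh Gm x).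
    { apply (Rmult_le_reg_r (1 - hh Gm x)); [lra|]. unfold Rdiv.
      rewrite Rmult_assoc, Rinv_l by lra. nra. }
    lra.
Qed.

Lemma mono_phi Gp Gm xc rho X u v k : Nice Gp Gm -> convex_below Gm xc -> 0 < rho <= 1/6 ->
  GoodX Gp Gm xc rho X -> X <= u -> u <= v -> 0 <= k <= 2 ->
  u + k * hh Gm u <= v + k * hh Gm v.
Proof.
  intros N C hr G hu huv hk.
  destruct (G u hu) as [_ [_ [h1 h2]]].
  pose proof (chord Gm xc u (v - u) C h2 ltac:(lra)).
  replace (u + (v - u)) with v in H by ring.
  pose proof (hh_pos Gp Gm u N). pose proof (hh_pos Gp Gm v N).
  pose proof (hh_pos Gp Gm (u - 1) N).
  assert (hh Gm u - hh Gm v <= (v - u) * (rho / 2)) by nra.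
  assert (k * (hh Gm u - hh Gm v) <= k * ((v - u) * (rho / 2))) by (apply Rmult_le_compat_l; lra).
  assert (k * rho <= 1/3) by nra.
  assert (k * ((v - u) * (rho / 2)) <= (v - u) / 6) by nra.
  lra.
Qed.

Lemma slow Gp Gm xc rho X y d : Nice Gp Gm -> convex_below Gm xc -> 0 < rho <= 1/6 ->
  GoodX Gp Gm xc rho X -> X <= y -> 0 <= d <= 2 * hh Gm y ->
  (1 - rho) * hh Gm y <= hh Gm (y + d).
Proof.
  intros N C hr G hy hd.
  destruct (G y hy) as [_ [_ [h1 h2]]].
  pose proof (chord Gm xc y d C h2 ltac:(lra)).
  pose proof (hh_pos Gp Gm y N). pose proof (hh_pos Gp Gm (y - 1) N).
  assert (d * (hh Gm (y - 1) - hh Gm y) <= d * hh Gm (y - 1)) by nra.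
  assert (d * hh Gm (y - 1) <= 2 * hh Gm y * (rho / 2)) by nra.
  nra.
Qed.

Definition phi Gp Gm x := stepL Gp Gm true x.

Lemma lower_step Gp Gm f T xc rho X a x : Nice Gp Gm -> convex_below Gm xc -> FH Gm f T ->
  0 < rho <= 1/6 -> GoodX Gp Gm xc rho X -> T < a -> X <= f a -> f a <= x ->
  f (a + (1 - rho)) <= phi Gp Gm x.
Proof.
  intros N C F hr G ha hX hx.
  destruct (G x ltac:(lra)) as [d1 _].
  pose proof (mono_phi Gp Gm xc rho X (f a) x (1 - rho) N C hr G hX hx ltac:(lra)).
  pose proof (f_S1 Gp Gm f T a (1 - rho) N F ha ltac:(lra)).
  unfold phi, stepL. lra.
Qed.

Lemma upper_step Gp Gm f T xc rho X b x : Nice Gp Gm -> convex_below Gm xc -> FH Gm f T ->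
  0 < rho <= 1/6 -> GoodX Gp Gm xc rho X -> T < b -> X <= x -> x <= f b ->
  phi Gp Gm x <= f (b + (1 + rho) / (1 - rho)).
Proof.
  intros N C F hr G hb hX hx.
  destruct (G x ltac:(lra)) as [_ [d2 _]].
  pose proof (mono_phi Gp Gm xc rho X x (f b) (1 + rho) N C hr G hX hx ltac:(lra)).
  set (be := (1 + rho) / (1 - rho)).
  assert (hbe : 1 <= be <= 2).
  { unfold be. split; apply (Rmult_le_reg_r (1 - rho)); try lra;
    unfold Rdiv; rewrite Rmult_assoc, Rinv_l by lra; lra. }
  assert (hbe2 : be * (1 - rho) = 1 + rho) by (unfold be; field; lra).
  destruct (f_mvt Gm f T b (b + be) F hb ltac:(lra)) as [c [hc e]].
  pose proof (f_S1 Gp Gm f T b (c - b) N F hb ltac:(lra)).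
  replace (b + (c - b)) with c in H0 by ring.
  pose proof (f_mono Gp Gm f T b c N F hb ltac:(lra)).
  pose proof (hh_pos Gp Gm (f b) N).
  assert (X <= f b) by lra.
  pose proof (slow Gp Gm xc rho X (f b) (f c - f b) N C hr G H3 ltac:(nra)).
  replace (f b + (f c - f b)) with (f c) in H4 by ring.
  replace (b + be - b) with be in e by ring.
  unfold phi, stepL. nra.
Qed.

Definition traj Gp Gm x0 (m : nat) := Nat.iter m (phi Gp Gm) x0.

Lemma traj_S Gp Gm x0 m : traj Gp Gm x0 (S m) = phi Gp Gm (traj Gp Gm x0 m).
Proof. reflexivity. Qed.

Lemma traj_ge Gp Gm x0 m : Nice Gp Gm -> x0 <= traj Gp Gm x0 m.
Proof.
  intro N. induction m; simpl; [lra|]. fold (traj Gp Gm x0 m).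
  pose proof (Dp_pos Gp Gm (traj Gp Gm x0 m) N). unfold phi, stepL. lra.
Qed.

Lemma traj_div Gp Gm x0 B : Nice Gp Gm -> exists n, B <= traj Gp Gm x0 n.
Proof.
  intro N.
  set (g := Rmin (gdiff Gp Gm (- B)) (gdiff Gp Gm (- x0))).
  assert (0 < g) by (unfold g; apply Rmin_case; apply g_pos; auto).
  assert (forall n, B <= traj Gp Gm x0 n \/ x0 + INR n * g <= traj Gp Gm x0 n).
  { induction n as [|n IH].
    - right. simpl. lra.
    - rewrite traj_S. pose proof (Dp_pos Gp Gm (traj Gp Gm x0 n) N).
      destruct (Rle_dec B (traj Gp Gm x0 n)).
      + left. unfold phi, stepL. lra.
      + destruct IH as [IH|IH]; [lra|]. right.
        pose proof (traj_ge Gp Gm x0 n N).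
        pose proof (Dp_lower Gp Gm (traj Gp Gm x0 n) N).
        pose proof (g_min Gp Gm N (- B) (- x0) (- traj Gp Gm x0 n) ltac:(lra)).
        rewrite S_INR. unfold phi, stepL. fold g in H3. lra. }
  destruct (nat_above ((B - x0) / g)) as [n hn].
  exists n. destruct (H0 n) as [h|h]; auto.
  assert (B - x0 < INR n * g).
  { apply (Rmult_lt_compat_r g) in hn; auto. unfold Rdiv in hn.
    rewrite Rmult_assoc, Rinv_l in hn by lra. lra. }
  lra.
Qed.

Lemma ratio_ok y F e : 0 < F -> (1 - e) * F <= y -> y <= (1 + e) * F -> Rabs (y / F - 1) <= e.
Proof.
  intros hF h1 h2. replace (y / F - 1) with ((y - F) / F) by (field; lra).
  unfold Rdiv. rewrite Rabs_mult, Rabs_inv, (Rabs_pos_eq F) by lra.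
  apply (Rmult_le_reg_r F); auto. rewrite Rmult_assoc, Rinv_l by lra.
  rewrite Rmult_1_r. apply Rabs_le. lra.
Qed.

Lemma lt_div x e k : 0 < e -> x / e < k -> x < k * e.
Proof.
  intros he h. apply (Rmult_lt_compat_r e) in h; auto. unfold Rdiv in h.
  rewrite Rmult_assoc, Rinv_l in h by lra. lra.
Qed.

Lemma div_le n d e : 0 < d -> n <= e * d -> n / d <= e.
Proof.
  intros hd h. apply (Rmult_le_reg_r d); auto. unfold Rdiv.
  rewrite Rmult_assoc, Rinv_l by lra. lra.
Qed.

Lemma det Gp Gm f T xc eps x0 c : Nice Gp Gm -> convex_below Gm xc -> FH Gm f T -> 0 < eps ->
  exists K : nat, forall m, (K <= m)%nat ->
    Rabs (traj Gp Gm x0 m / f (INR m + c) - 1) <= eps.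
Proof.
  intros N C F heps.
  set (e := Rmin eps 1).
  assert (he : 0 < e <= 1) by (unfold e; split; [apply Rmin_case; lra|apply Rmin_r]).
  assert (hee : e <= eps) by apply Rmin_l.
  set (rho := e / 6).
  assert (hr : 0 < rho <= 1/6) by (unfold rho; lra).
  destruct (goodX_exists Gp Gm xc rho N hr) as [X G].
  set (T1 := Rmax T 0 + 1).
  assert (hT1 : T < T1 /\ 0 < T1) by (unfold T1; pose proof (Rmax_l T 0); pose proof (Rmax_r T 0); lra).
  destruct (f_unb Gp Gm f T T1 X N F ltac:(lra)) as [a0 [ha0 hXa0]].
  destruct (traj_div Gp Gm x0 (f a0) N) as [n1 hn1].
  destruct (f_unb Gp Gm f T T1 (traj Gp Gm x0 n1) N F ltac:(lra)) as [b0 [hb0 hb0']].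
  set (al := 1 - rho). set (be := (1 + rho) / (1 - rho)).
  assert (hbe : be * (1 - rho) = 1 + rho) by (unfold be; field; lra).
  assert (hbe1 : 1 <= be) by nra.
  assert (inv : forall k : nat, f (a0 + INR k * al) <= traj Gp Gm x0 (n1 + k) /\
                              traj Gp Gm x0 (n1 + k) <= f (b0 + INR k * be)).
  { induction k as [|k IH].
    - rewrite Nat.add_0_r. simpl. rewrite !Rmult_0_l, !Rplus_0_r. lra.
    - rewrite Nat.add_succ_r, traj_S, S_INR. destruct IH as [IH1 IH2].
      pose proof (pos_INR k).
      set (x := traj Gp Gm x0 (n1 + k)) in *.
      assert (hfa : f a0 <= f (a0 + INR k * al))
        by (apply (f_mono Gp Gm f T); [auto|auto|lra|unfold al; nra]).
      split.
      + replace (a0 + (INR k + 1) * al) with ((a0 + INR k * al) + (1 - rho)) by (unfold al; ring).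
        apply (lower_step Gp Gm f T xc rho X); auto; [unfold al; nra|lra].
      + replace (b0 + (INR k + 1) * be) with ((b0 + INR k * be) + (1 + rho) / (1 - rho)) by (unfold be; ring).
        apply (upper_step Gp Gm f T xc rho X); auto; [nra|lra]. }
  set (Cc := INR n1 + c).
  set (K0 := Rmax (T1 + 1 - Cc) (Rmax (2 * (b0 - Cc - e * (Cc - T1)) / e) (3 * (Cc - a0) / (2 * e)))).
  destruct (nat_above K0) as [K hK].
  exists (n1 + K)%nat. intros m hm.
  set (k := (m - n1)%nat).
  assert (em : m = (n1 + k)%nat) by (unfold k; lia).
  assert (hk : INR K <= INR k) by (apply le_INR; unfold k; lia).
  assert (et : INR m + c = INR k + Cc) by (rewrite em, plus_INR; unfold Cc; ring).
  rewrite et. rewrite em.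
  destruct (inv k) as [i1 i2].
  set (y := traj Gp Gm x0 (n1 + k)) in *.
  set (t := INR k + Cc).
  pose proof (Rmax_l (T1 + 1 - Cc) (Rmax (2 * (b0 - Cc - e * (Cc - T1)) / e) (3 * (Cc - a0) / (2 * e)))).
  pose proof (Rmax_r (T1 + 1 - Cc) (Rmax (2 * (b0 - Cc - e * (Cc - T1)) / e) (3 * (Cc - a0) / (2 * e)))).
  pose proof (Rmax_l (2 * (b0 - Cc - e * (Cc - T1)) / e) (3 * (Cc - a0) / (2 * e))).
  pose proof (Rmax_r (2 * (b0 - Cc - e * (Cc - T1)) / e) (3 * (Cc - a0) / (2 * e))).
  fold K0 in H, H0.
  assert (hkK : K0 < INR k) by lra.
  assert (ht : T1 + 1 < t) by (unfold t; lra).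
  assert (hft : 0 < f t) by (apply (fh_pos _ _ _ F); lra).
  assert (hb1 : 2 * (b0 - Cc - e * (Cc - T1)) < INR k * e) by (apply lt_div; lra).
  assert (ha1 : 3 * (Cc - a0) < INR k * (2 * e)) by (apply lt_div; lra).
  pose proof (pos_INR k) as hk0.
  assert (hbe2 : (be - 1) <= e / 2).
  { assert ((be - 1) * (1 - rho) = 2 * rho) by nra.
    apply (Rmult_le_reg_r (1 - rho)); [lra|]. rewrite H3. unfold rho. nra. }
  apply (Rle_trans _ e _); auto.
  apply ratio_ok; auto.
  -
    set (a := a0 + INR k * al) in *.
    assert (haT : T1 < a) by (unfold a, al; nra).
    destruct (Rle_dec t a) as [hta|hta].
    + pose proof (f_mono Gp Gm f T t a N F ltac:(lra) hta). nra.
    + pose proof (f_reg Gp Gm f T T1 a t N F ltac:(lra) ltac:(lra) haT ltac:(lra)).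
      set (r := (t - a) / (a - T1)) in *.
      assert (hr0 : 0 <= r) by (unfold r; apply Rmult_le_pos; [lra|left; apply Rinv_0_lt_compat; lra]).
      assert (hre : r <= e).
      { unfold r. apply div_le; [lra|]. unfold t, a, al, rho.
        assert (e * (1 - e / 6) - e / 6 >= 2 * e / 3) by nra. nra. }
      assert (0 < f a) by (apply (fh_pos _ _ _ F); lra).
      assert ((1 - e) * (1 + r) <= 1) by nra.
      nra.
  -
    set (b := b0 + INR k * be) in *.
    assert (hbT : T1 < b) by (unfold b; nra).
    destruct (Rle_dec b t) as [hbt|hbt].
    + pose proof (f_mono Gp Gm f T b t N F ltac:(lra) hbt). nra.
    + pose proof (f_reg Gp Gm f T T1 t b N F ltac:(lra) ltac:(lra) ltac:(lra) ltac:(lra)).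
      set (r := (b - t) / (t - T1)) in *.
      assert (hre : r <= e).
      { unfold r. apply div_le; [lra|]. unfold t, b. nra. }
      nra.
Qed.

Lemma ell_traj Gp Gm a N0 n : (N0 <= n)%nat -> (forall i, (N0 <= i < n)%nat -> a i = true) ->
  ell Gp Gm a n = traj Gp Gm (ell Gp Gm a N0) (n - N0).
Proof.
  induction n as [|n IH]; intros h H.
  - assert (N0 = 0%nat) by lia. subst. reflexivity.
  - destruct (Nat.eq_dec N0 (S n)) as [->|hne].
    + rewrite Nat.sub_diag. reflexivity.
    + replace (S n - N0)%nat with (S (n - N0)) by lia. rewrite traj_S.
      rewrite <- IH by (try lia; intros; apply H; lia).
      simpl. rewrite (H n) by lia. reflexivity.
Qed.

Lemma ell_firstn Gp Gm s N0 : (N0 <= length s)%nat ->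
  ell Gp Gm (seq_fun s) N0 = Lv Gp Gm (firstn N0 s).
Proof.
  intro h. unfold Lv. rewrite length_firstn. replace (Init.Nat.min N0 (length s)) with N0 by lia.
  apply ell_ext. intros i hi. unfold seq_fun. rewrite nth_firstn.
  replace (i <? N0)%nat with true; auto. symmetry. apply Nat.ltb_lt. auto.
Qed.

Lemma uniform_K (l : list (list bool)) (Q : list bool -> nat -> Prop) :
  (forall s, In s l -> exists K, forall m, (K <= m)%nat -> Q s m) ->
  exists K, forall s, In s l -> forall m, (K <= m)%nat -> Q s m.
Proof.
  induction l as [|x l IH]; intro H.
  - exists 0%nat. intros s [].
  - destruct (H x (or_introl eq_refl)) as [K1 h1].
    destruct IH as [K2 h2]. { intros; apply H; right; auto. }
    exists (Nat.max K1 K2). intros s [<-|hs] m hm.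
    + apply h1; lia.
    + apply h2; auto; lia.
Qed.

Theorem theorem3 (Gp Gm f : R -> R) :
  is_cdf Gp -> is_cdf Gm -> llr_pair Gp Gm -> unbounded_signals Gp Gm ->
  continuity Gp -> continuity Gm ->
  left_tail_convex_differentiable Gm ->
  (forall t, 0 < t -> 0 < f t) ->
  (exists T, 0 < T /\ forall t, T < t -> derivable_pt_lim f t (Gm (- f t))) ->
  ratio_tends_to_one_as Gp Gm f.
Proof.
  intros Cp Cm Lp U _ _ [xc [Cv _]] fpos [T [_ HT]].
  pose proof (nice_of Gp Gm Cp Cm Lp U) as N.
  assert (C : convex_below Gm xc) by exact Cv.
  assert (F : FH Gm f T) by (constructor; auto).
  intros eps heps delta hdelta.
  set (L0 := Rmax 0 (ln (3 / delta))).
  assert (hL0 : exp (- L0) <= delta / 3).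
  { apply Rle_trans with (exp (- ln (3 / delta))).
    - apply exp_le. pose proof (Rmax_r 0 (ln (3 / delta))). fold L0 in H. lra.
    - rewrite exp_Ropp, exp_ln by (apply Rdiv_lt_0_compat; lra). right. field. lra. }
  destruct (learning Gp Gm L0 (delta / 3) N ltac:(lra)) as [N0 hN0].
  destruct (uniform_K (all_seqs N0)
     (fun s m => Rabs (traj Gp Gm (Lv Gp Gm s) m / f (INR m + (INR N0 + 1)) - 1) <= eps))
     as [K HK].
  { intros s _. apply (det Gp Gm f T xc eps); auto. }
  exists (N0 + K)%nat. intros M hM.
  unfold prob_deviation.
  apply Rle_lt_trans with
    (E Gp Gm M (fun s => ind1 L0 (ell Gp Gm (seq_fun s) N0)) +
     E Gp Gm M (fun s => ind2 L0 (ell Gp Gm (seq_fun s) N0)) +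
     E Gp Gm M (Wf Gp Gm N0 L0)).
  2:{ rewrite !E_tower by lia.
      pose proof (markov Gp Gm N0 L0 N). pose proof (W_bound Gp Gm N0 L0 M N ltac:(lia)). lra. }
  rewrite <- !E_plus. unfold E. fold (sum_all M (fun s =>
     if deviates_between Gp Gm f eps (seq_fun s) (N0 + K) M then path_prob Gp Gm (seq_fun s) M else 0)).
  apply sum_all_le. intros s hs.
  pose proof (Pv_nonneg Gp Gm s N) as hP.
  replace (path_prob Gp Gm (seq_fun s) M) with (Pv Gp Gm s) by (unfold Pv; rewrite hs; auto).
  set (v := ell Gp Gm (seq_fun s) N0).
  assert (i1 : 0 <= ind1 L0 v) by (unfold ind1; destruct (Rle_dec v (- L0)); lra).
  assert (i2 : 0 <= ind2 L0 v) by (unfold ind2; destruct (Rlt_dec (- L0) v); [destruct (Rle_dec v L0)|]; lra).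
  assert (i3 : 0 <= Wf Gp Gm N0 L0 s).
  { unfold Wf. destruct (Rlt_dec L0 _); [destruct (bad N0 s)|]; try lra. left; apply exp_pos. }
  destruct (deviates_between Gp Gm f eps (seq_fun s) (N0 + K) M) eqn:hdev.
  2:{ apply Rmult_le_pos; [exact hP|]. clearbody v. lra. }
  enough (1 <= ind1 L0 v + ind2 L0 v + Wf Gp Gm N0 L0 s) by nra.
  destruct (Rle_dec v (- L0)) as [h1|h1].
  { assert (ind1 L0 v = 1) by (unfold ind1; destruct (Rle_dec v (- L0)); [auto|contradiction]). lra. }
  destruct (Rle_dec v L0) as [h2|h2].
  { assert (ind2 L0 v = 1).
    { unfold ind2. destruct (Rlt_dec (- L0) v); [|lra]. destruct (Rle_dec v L0); [auto|contradiction]. }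
    lra. }
  destruct (bad N0 s) eqn:hbad.
  { assert (Wf Gp Gm N0 L0 s = 1).
    { unfold Wf. fold v. rewrite hbad. destruct (Rlt_dec L0 v); [auto|lra]. }
    lra. }
  exfalso.
  unfold deviates_between in hdev. apply existsb_exists in hdev.
  destruct hdev as [n [hn hd]]. apply in_seq in hn.
  unfold deviates in hd. destruct (Rlt_dec eps _) as [hlt|]; [|discriminate].
  assert (hall : forall i, (N0 <= i < M)%nat -> seq_fun s i = true).
  { intros i hi. unfold bad in hbad.
    destruct (seq_fun s i) eqn:e; auto.
    assert (existsb (fun i => negb (seq_fun s i)) (seq N0 (length s - N0)) = true).
    { apply existsb_exists. exists i. split; [apply in_seq; lia|rewrite e; auto]. }
    congruence. }
  rewrite (ell_traj Gp Gm (seq_fun s) N0 n) in hlt by (try lia; intros; apply hall; lia).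
  rewrite ell_firstn in hlt by lia.
  assert (hin : In (firstn N0 s) (all_seqs N0)).
  { apply all_seqs_in. rewrite length_firstn. lia. }
  pose proof (HK _ hin (n - N0)%nat ltac:(lia)).
  replace (INR (n - N0) + (INR N0 + 1)) with (INR (S n)) in H
    by (rewrite S_INR, <- (Nat.sub_add N0 n) at 1 by lia; rewrite plus_INR; ring).
  lra.
Qed.
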